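(* Let $\varphi$ be a coprime automorphism of a pronilpotent group $G$. Then the restriction of the map $\theta\colon x\mapsto[x,\varphi]$ to the set $K=\{[g,\varphi]\mid g\in G\}$ is injective.
   Context: $\varphi$ is a coprime automorphism of a profinite group $H$ if the procyclic group $\langle\varphi\rangle$ acts faithfully on $H$ by continuous automorphisms and $\pi(\langle\varphi\rangle)\cap\pi(H)=\varnothing$, where $\pi(X)$ denotes the set of primes dividing the (Steinitz) orders of elements of $X$. Here $[x,\varphi]=x^{-1}x^{\varphi}$. *)

(* Defs.v *)
From mathcomp Require Import all_boot.
From mathcomp Require Import boolp classical_sets topology.
Set Implicit Arguments. Unset Strict Implicit. Unset Printing Implicit Defensive.
Local Open Scope classical_set_scope.

Section Defs.
Variables (T : topologicalType) (mul : T -> T -> T) (inv : T -> T) (e : T).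

Definition group_laws : Prop :=
  [/\ forall x y z, mul x (mul y z) = mul (mul x y) z,
      forall x, mul e x = x &
      forall x, mul (inv x) x = e].

Definition topological_group : Prop :=
  [/\ group_laws,
      continuous (fun p : T * T => mul p.1 p.2) &
      continuous inv].

Definition profinite_group : Prop :=
  [/\ topological_group, compact [set: T], hausdorff_space T &
      totally_disconnected [set: T]].

Definition gpow (x : T) (n : nat) : T := iter n (mul x) e.

Definition subgroup (U : set T) : Prop :=
  [/\ U e, forall x y, U x -> U y -> U (mul x y) & forall x, U x -> U (inv x)].

Definition normal (U : set T) : Prop :=
  forall g x, U x -> U (mul (inv g) (mul x g)).

Definition open_normal_subgroup (U : set T) : Prop :=
  [/\ open U, subgroup U & normal U].

(* commutator [x, y] = x^-1 y^-1 x y, and left-normed commutators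
   [x0, s_1, ..., s_k] = [[x0, s_1, ..., s_(k-1)], s_k] *)
Definition comm (x y : T) : T := mul (inv x) (mul (inv y) (mul x y)).
Definition lcomm (x0 : T) (s : seq T) : T := foldl comm x0 s.

(* G/U is nilpotent (of class <= c): gamma_(c+1)(G/U) = 1, i.e. every
   left-normed commutator of weight c+1 lies in U *)
Definition nilpotent_quotient (U : set T) : Prop :=
  exists c : nat, forall (x0 : T) (s : seq T), size s = c -> U (lcomm x0 s).

Definition pronilpotent_group : Prop :=
  profinite_group /\
  forall U, open_normal_subgroup U -> nilpotent_quotient U.

(* p divides the Steinitz order of the element x: p divides the order of the
   image of x in some continuous finite quotient G/U *)
Definition prime_divides_order (p : nat) (x : T) : Prop :=
  prime p /\
  exists U, open_normal_subgroup U /\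
    exists n, [/\ 0 < n, U (gpow x n),
                  (forall m, 0 < m < n -> ~ U (gpow x m)) & p %| n].

Definition pi_set (X : set T) (p : nat) : Prop :=
  exists x, X x /\ prime_divides_order p x.

Definition topologically_generated_by (x : T) : Prop :=
  closure [set y | exists n, y = gpow x n \/ y = inv (gpow x n)] = [set: T].

End Defs.

Section Coprime.
Variables (G : topologicalType) (mul : G -> G -> G) (inv : G -> G) (e : G).
Variables (A : topologicalType) (amul : A -> A -> A) (ainv : A -> A) (ae : A).
Variables (act : A -> G -> G) (phi : A).

(* A is the procyclic group <phi>, acting (on the right, x^(ab) = (x^a)^b)
   continuously and faithfully on G by (continuous) group automorphisms *)
Definition coprime_automorphism : Prop :=
  [/\ profinite_group amul ainv ae,
      topologically_generated_by amul ainv ae phi,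
      [/\ forall x, act ae x = x,
          forall a b x, act (amul a b) x = act b (act a x),
          forall a x y, act a (mul x y) = mul (act a x) (act a y) &
          continuous (fun p : A * G => act p.1 p.2)],
      (forall a, (forall x, act a x = x) -> a = ae) &
      (forall p, pi_set amul ainv ae [set: A] p -> ~ pi_set mul inv e [set: G] p)].

Definition theta (x : G) : G := mul (inv x) (act phi x).

Definition Kset : set G := [set theta g | g in [set: G]].

End Coprime.

(* Main.v *)
Require Import Defs.
From mathcomp Require Import all_boot.
From mathcomp Require Import boolp classical_sets topology.
Local Open Scope classical_set_scope.
Unset Printing Implicit Defensive.
Set Implicit Arguments. Unset Strict Implicit.

Section Alg.
Variables (T : topologicalType) (mul : T -> T -> T) (inv : T -> T) (e : T).
Hypothesis gl : group_laws mul inv e.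

Lemma mulA x y z : mul x (mul y z) = mul (mul x y) z.
Proof. by case: gl. Qed.
Lemma mul1g x : mul e x = x.
Proof. by case: gl. Qed.
Lemma mulVg x : mul (inv x) x = e.
Proof. by case: gl. Qed.
Lemma mulKg x y : mul (inv x) (mul x y) = y.
Proof. by rewrite mulA mulVg mul1g. Qed.
Lemma mulgV x : mul x (inv x) = e.
Proof.
have h : mul (mul x (inv x)) (mul x (inv x)) = mul x (inv x).
  by rewrite -mulA (mulA (inv x)) mulVg mul1g.
by rewrite -(mulKg (mul x (inv x)) (mul x (inv x))) h mulVg.
Qed.
Lemma mulg1 x : mul x e = x.
Proof. by rewrite -(mulVg x) mulA mulgV mul1g. Qed.
Lemma mulKVg x y : mul x (mul (inv x) y) = y.
Proof. by rewrite mulA mulgV mul1g. Qed.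
Lemma mulgK x y : mul (mul y x) (inv x) = y.
Proof. by rewrite -mulA mulgV mulg1. Qed.
Lemma mulgKV x y : mul (mul y (inv x)) x = y.
Proof. by rewrite -mulA mulVg mulg1. Qed.
Lemma mulg_invE x y : mul x y = e -> x = inv y.
Proof. by move=> h; rewrite -(mulgK y x) h mul1g. Qed.
Lemma invK x : inv (inv x) = x.
Proof. by symmetry; apply: mulg_invE; rewrite mulgV. Qed.
Lemma invM x y : inv (mul x y) = mul (inv y) (inv x).
Proof.
symmetry; apply: mulg_invE.
by rewrite -mulA (mulA (inv x)) mulVg mul1g mulVg.
Qed.
Lemma inv1 : inv e = e.
Proof. by rewrite -(mulg1 (inv e)) mulVg. Qed.
Lemma mulgI x y z : mul x y = mul x z -> y = z.
Proof. by move=> h; rewrite -(mulKg x y) h mulKg. Qed.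
Lemma mulIg x y z : mul y x = mul z x -> y = z.
Proof. by move=> h; rewrite -(mulgK x y) h mulgK. Qed.

Lemma gpowS x n : gpow mul e x n.+1 = mul x (gpow mul e x n).
Proof. by []. Qed.
Lemma gpow0 x : gpow mul e x 0 = e.
Proof. by []. Qed.
Lemma gpowD x a b : gpow mul e x (a + b) = mul (gpow mul e x a) (gpow mul e x b).
Proof.
elim: a => [|a IH]; first by rewrite add0n gpow0 mul1g.
by rewrite addSn !gpowS IH mulA.
Qed.
Lemma gpowM x a b : gpow mul e x (a * b) = gpow mul e (gpow mul e x a) b.
Proof.
elim: b => [|b IH]; first by rewrite muln0.
by rewrite mulnS gpowD IH gpowS.
Qed.

Section Sub.
Variable U : set T.
Hypothesis sU : subgroup mul inv e U.
Lemma sub1 : U e. Proof. by case: sU. Qed.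
Lemma subM x y : U x -> U y -> U (mul x y). Proof. by case: sU => _ h _; apply: h. Qed.
Lemma subV x : U x -> U (inv x). Proof. by case: sU => _ _ h; apply: h. Qed.
Lemma subVE x : U (inv x) -> U x. Proof. by move/subV; rewrite invK. Qed.
Lemma subMl x y : U x -> U (mul x y) -> U y.
Proof. by move=> ux uxy; rewrite -(mulKg x y); apply: subM => //; apply: subV. Qed.
Lemma subMr x y : U y -> U (mul x y) -> U x.
Proof. by move=> uy uxy; rewrite -(mulgK y x); apply: subM => //; apply: subV. Qed.
Lemma subX x n : U x -> U (gpow mul e x n).
Proof. by move=> ux; elim: n => [|n IH]; [apply: sub1 | apply: subM]. Qed.
End Sub.

Ltac gsimpl := rewrite /comm ?invM ?invK -?mulA ?(mulKg, mulKVg, mulVg, mulgV, mulg1, mul1g, inv1).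

Lemma commI2 x y z : comm mul inv (mul x y) z =
  mul (mul (inv y) (mul (comm mul inv x z) y)) (comm mul inv y z).
Proof. by gsimpl. Qed.
Lemma commI3 x z : comm mul inv (inv x) z =
  mul (inv (inv x)) (mul (inv (comm mul inv x z)) (inv x)).
Proof. by gsimpl. Qed.
Lemma commI4 g x y : comm mul inv (mul (inv g) (mul x g)) y =
  mul (inv g) (mul (comm mul inv x (mul g (mul y (inv g)))) g).
Proof. by gsimpl. Qed.
Lemma commI1 y : comm mul inv e y = e.
Proof. by gsimpl. Qed.

Section Main.
Variable f : T -> T.
Hypothesis fM : forall x y, f (mul x y) = mul (f x) (f y).
Variable U : set T.
Hypotheses (sU : subgroup mul inv e U) (nU : normal mul inv U).

Lemma f1 : f e = e.
Proof. by apply: (@mulgI (f e)); rewrite -fM !mulg1. Qed.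
Lemma fV x : f (inv x) = inv (f x).
Proof. by apply: mulg_invE; rewrite -fM mulVg f1. Qed.

Fixpoint Zs i := if i is i'.+1 then [set x | forall y, Zs i' (comm mul inv x y)] else U.

Lemma Zs_ns i : subgroup mul inv e (Zs i) /\ normal mul inv (Zs i).
Proof.
elim: i => [|i [sZ nZ]] /=; first by split.
split; first split.
- by move=> y; rewrite commI1; exact: sub1.
- move=> x y hx hy z; rewrite commI2; apply: (subM sZ); [apply: nZ; apply: hx | apply: hy].
- by move=> x hx z; rewrite commI3; apply: nZ; apply: subV => //; apply: hx.
- by move=> g x hx y; rewrite commI4; apply: nZ; apply: hx.
Qed.

Lemma U_Zs i : U `<=` Zs i.
Proof.
elim: i => [|i IH] //= x ux y; apply: IH; rewrite /comm.
by apply: subM => //; [apply: subV | apply: nU].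
Qed.

Lemma Zs_lcomm i x : (forall s, size s = i -> U (lcomm mul inv x s)) -> Zs i x.
Proof.
elim: i x => [|i IH] x h /=; first by apply: (h [::]).
by move=> y; apply: IH => s hs; apply: (h (y :: s)); rewrite /= hs.
Qed.

Fixpoint Nm j x := if j is j'.+1 then mul x (Nm j' (f x)) else e.

Lemma Nm_theta j g : Nm j (mul (inv g) (f g)) = mul (inv g) (iter j f g).
Proof.
elim: j g => [|j IH] g /=; first by rewrite mulVg.
by rewrite fM fV IH -iterSr -mulA mulKVg.
Qed.

Lemma Zs_step i c g1 g2 n m :
  0 < m -> coprime m n ->
  (forall x, U (mul (inv x) (iter n f x))) ->
  f c = c -> mul c (mul (inv g1) (f g1)) = mul (inv g2) (f g2) ->
  U (gpow mul e c m) -> Zs i.+1 c -> Zs i c.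
Proof.
move=> m0 cop hn fc hk hm hc.
have [sZ nZ] := Zs_ns i.
have [sZ1 _] := Zs_ns i.+1.
have cj j : Zs i.+1 (gpow mul e c j) by apply: (subX sZ1).
have key j k : Zs i (mul (inv (mul (gpow mul e c j) (Nm j k))) (Nm j (mul c k))).
  elim: j k => [|j IH] k /=.
    by rewrite !mulg1 inv1; apply: (sub1 sZ).
  rewrite fM fc; have := IH (f k).
  set a := Nm j (f k); set b := Nm j (mul c (f k)); set w := mul _ b => hw.
  have hb : b = mul (mul (gpow mul e c j) a) w by rewrite /w mulKVg.
  rewrite hb.
  have -> : mul (inv (mul (mul c (gpow mul e c j)) (mul k a))) (mul (mul c k) (mul (mul (gpow mul e c j) a) w))
     = mul (mul (inv a) (mul (inv (comm mul inv (gpow mul e c j) k)) a)) w by gsimpl.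
  apply: (subM sZ) => //; apply: nZ; apply: (subV sZ); exact: (cj j k).
have hcn : Zs i (gpow mul e c n).
  have := key n (mul (inv g1) (f g1)); rewrite hk !Nm_theta => h.
  have u1 := U_Zs i (hn g1); have u2 := U_Zs i (hn g2).
  have := subMr sZ u2 h => /(subVE sZ) h2.
  exact: (subMr sZ u1 h2).
have [a _] := Bezoutl n m0; rewrite (eqP cop) => /dvdnP [q hq].
have : Zs i (gpow mul e c (1 + a * n)).
  rewrite hq mulnC gpowM; apply: U_Zs; exact: (subX sU).
rewrite gpowD mulnC gpowM /= mulg1 => h.
exact: (subMr sZ (subX sZ a hcn) h).
Qed.

Lemma alg_main cl c g1 g2 n m :
  (forall x s, size s = cl -> U (lcomm mul inv x s)) ->
  0 < m -> coprime m n ->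
  (forall x, U (mul (inv x) (iter n f x))) ->
  f c = c -> mul c (mul (inv g1) (f g1)) = mul (inv g2) (f g2) ->
  U (gpow mul e c m) -> U c.
Proof.
move=> nil m0 cop hn fc hk hm.
suff h : forall d, Zs (cl - d) c by have := h cl; rewrite subnn.
elim=> [|d IH]; first by rewrite subn0; apply: Zs_lcomm => s hs; apply: nil.
case: (ltnP d cl) => hd.
  apply: (Zs_step m0 cop hn fc hk hm).
  by rewrite -subSn // subSS.
have h0 : cl - d.+1 = 0 by apply/eqP; rewrite subn_eq0 ltnW.
have h1 : cl - d = 0 by apply/eqP; rewrite subn_eq0.
by rewrite h0; rewrite h1 in IH.
Qed.
End Main.
End Alg.

Lemma tube (X Y : topologicalType) (K : set Y) (x0 : X) (P : X -> Y -> Prop) :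
  compact K ->
  (forall y, K y -> nbhs (x0, y) (fun p => P p.1 p.2)) ->
  \forall x \near x0, forall y, K y -> P x y.
Proof.
move=> /compact_near_coveringP cK h.
have := cK X (nbhs x0) (fun i y => P i y) _ _.
apply.
move=> y Ky; have [[A B] [hA hB] sub] := h y Ky.
exists (B, A) => //= -[y' x'] /= [By Ax]; exact: (sub (x', y')).
Qed.

Lemma cont_pair (X Y Z : topologicalType) (f : X -> Y) (g : X -> Z) x :
  {for x, continuous f} -> {for x, continuous g} ->
  {for x, continuous (fun t => (f t, g t))}.
Proof. by move=> cf cg; apply: cvg_pair. Qed.

Lemma cont_fst (X Y : topologicalType) (p : X * Y) : {for p, continuous fst}.
Proof. by case: p => a b; apply: cvg_fst. Qed.
Lemma cont_snd (X Y : topologicalType) (p : X * Y) : {for p, continuous snd}.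
Proof. by case: p => a b; apply: cvg_snd. Qed.
Lemma cont_cst (X Y : topologicalType) (c : Y) (p : X) : {for p, continuous (fun _ => c)}.
Proof. exact: cvg_cst. Qed.
Lemma cont_id (X : topologicalType) (p : X) : {for p, continuous id}.
Proof. exact: cvg_id. Qed.

Lemma cont_comp2 (X Y Z W : topologicalType) (h : Y * Z -> W) (f : X -> Y) (g : X -> Z) x :
  continuous h -> {for x, continuous f} -> {for x, continuous g} ->
  {for x, continuous (fun t => h (f t, g t))}.
Proof.
move=> ch cf cg.
apply: (continuous_comp (f := fun t => (f t, g t)) (g := h)); first exact: cont_pair.
exact: ch.
Qed.

Lemma cont_comp1 (X Y Z : topologicalType) (h : Y -> Z) (f : X -> Y) x :
  continuous h -> {for x, continuous f} -> {for x, continuous (fun t => h (f t))}.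
Proof. by move=> ch cf; apply: (continuous_comp (f := f) (g := h)) => //; apply: ch. Qed.

Lemma cont_nbhs (X Y : topologicalType) (f : X -> Y) x (O : set Y) :
  {for x, continuous f} -> open O -> O (f x) -> nbhs x (fun t => O (f t)).
Proof.
move=> cf oO Ofx; have := cf O; apply.
by apply: open_nbhs_nbhs; split.
Qed.

Unset Implicit Arguments. Set Strict Implicit.

Section TG.
Variables (T : topologicalType) (mul : T -> T -> T) (inv : T -> T) (e : T).
Hypothesis tg : topological_group mul inv e.
Hypothesis cpt : compact [set: T].

Let gl : group_laws mul inv e. Proof. by case: tg. Qed.
Let mulC : continuous (fun p : T * T => mul p.1 p.2). Proof. by case: tg. Qed.
Let invC : continuous inv. Proof. by case: tg. Qed.

Lemma cont_lmul a : continuous (fun y => mul a y).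
Proof.
move=> y.
have := (@cont_comp2 T T T T (fun p : T * T => mul p.1 p.2) (fun _ => a) id y
   mulC (@cont_cst _ _ a y) (@cont_id _ y)).
exact.
Qed.

Lemma open_sub (H : set T) : subgroup mul inv e H -> nbhs e H -> open H.
Proof.
move=> sH nH; rewrite openE => x Hx.
have : nbhs x (fun t => H (mul (inv x) t)).
  have h := cont_lmul (inv x) x H; apply: h; rewrite /= (mulVg gl); exact: nH.
apply: filterS => t Ht; rewrite -(mulKVg gl x t); exact: (subM sH Hx Ht).
Qed.

Lemma pow_in (S : set T) : open S -> subgroup mul inv e S ->
  forall x, exists n, 0 < n /\ S (gpow mul e x n).
Proof.
move=> oS sS x.
pose F := (fun n => gpow mul e x n) @ \oo.
have [z [_ clz]] := cpt F _ filterT.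
pose B := [set y | S (mul (inv z) y)].
have nB : nbhs z B.
  have h1 : S (mul (inv z) z) by rewrite (mulVg gl); exact: (sub1 sS).
  exact: (cont_nbhs (cont_lmul (inv z) z) oS h1).
have F1 : \forall n \near \oo, exists m, True /\ gpow mul e x m = gpow mul e x n.
  by near=> n; exists n.
have [_ [[n1 [_ <-]] B1]] := clz [set y | exists m, True /\ gpow mul e x m = y] B F1 nB.
have F2 : \forall n \near \oo, exists m, n1 < m /\ gpow mul e x m = gpow mul e x n.
  near=> n; exists n; split => //; near: n; exact: nbhs_infty_gt.
have [_ [[n2 [hn2 <-]] B2]] := clz [set y | exists m, n1 < m /\ gpow mul e x m = y] B F2 nB.
exists (n2 - n1); split; first by rewrite subn_gt0.
have := subM sS (subV sS B1) B2.
by rewrite (invM gl) (invK gl) -(mulA gl) (mulKVg gl) -{1}(subnKC (ltnW hn2)) (gpowD gl) (mulKg gl).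
Unshelve. all: by end_near.
Qed.

Lemma stab_sub (W : set T) : clopen W -> W e ->
  exists S : set T, [/\ open S, subgroup mul inv e S & S `<=` W].
Proof.
move=> [oW cW] We.
pose S := [set x | forall w, W (mul w x) <-> W w].
have cK : compact W by apply: (subclosed_compact cW cpt).
have nS : nbhs e S.
  have h : \forall x \near e, forall w, W w -> W (mul w x) /\ W (mul w (inv x)).
    apply: (@tube T T W e (fun x w => W (mul w x) /\ W (mul w (inv x))) cK).
    move=> w Ww; apply: filterI.
      apply: (cont_nbhs (f := fun p : T * T => mul p.2 p.1)) => //=; last by rewrite (mulg1 gl).
      have := @cont_comp2 _ _ _ _ (fun p : T * T => mul p.1 p.2) snd fst (e, w) mulC (@cont_snd _ _ _) (@cont_fst _ _ _); exact.
    apply: (cont_nbhs (f := fun p : T * T => mul p.2 (inv p.1))) => //=; last by rewrite (inv1 gl) (mulg1 gl).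
    have := @cont_comp2 _ _ _ _ (fun p : T * T => mul p.1 p.2) snd (fun p => inv p.1) (e, w) mulC (@cont_snd _ _ _) (cont_comp1 invC (@cont_fst _ _ _)); exact.
  apply: filterS h => x Ax w; split; last by move=> Ww; have [] := Ax w Ww.
  move=> Wwx; have [_ ] := Ax _ Wwx; by rewrite (mulgK gl).
have sgS : subgroup mul inv e S.
  split.
  - by move=> w; rewrite (mulg1 gl).
  - by move=> x y Sx Sy w; rewrite (mulA gl) Sy Sx.
  - by move=> x Sx w; rewrite -(Sx (mul w (inv x))) (mulgKV gl).
exists S; split => //; first exact: open_sub.
by move=> x Sx; have := Sx e; rewrite (mul1g gl) => ->.
Qed.

Lemma core_sub (S : set T) : open S -> subgroup mul inv e S ->
  exists N : set T, open_normal_subgroup mul inv e N /\ N `<=` S.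
Proof.
move=> oS sS.
pose N := [set y | forall g, S (mul (inv g) (mul y g))].
have sN : subgroup mul inv e N.
  split.
  - by move=> g; rewrite (mul1g gl) (mulVg gl); exact: (sub1 sS).
  - move=> x y Nx Ny g.
    have -> : mul (inv g) (mul (mul x y) g) = mul (mul (inv g) (mul x g)) (mul (inv g) (mul y g)).
      by rewrite -!(mulA gl) (mulKVg gl).
    exact: (subM sS (Nx g) (Ny g)).
  - move=> x Nx g.
    have -> : mul (inv g) (mul (inv x) g) = inv (mul (inv g) (mul x g)) by rewrite !(invM gl) (invK gl) (mulA gl).
    exact: (subV sS (Nx g)).
have nN : normal mul inv N.
  move=> h x Nx g.
  have -> : mul (inv g) (mul (mul (inv h) (mul x h)) g) = mul (inv (mul h g)) (mul x (mul h g)).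
    by rewrite (invM gl) -!(mulA gl).
  exact: Nx.
have nbN : nbhs e N.
  have h : \forall y \near e, forall g, [set: T] g -> S (mul (inv g) (mul y g)).
    apply: (@tube T T setT e (fun y g => S (mul (inv g) (mul y g))) cpt).
    move=> g _.
    apply: (cont_nbhs (f := fun p : T * T => mul (inv p.2) (mul p.1 p.2))) => //=.
      have := @cont_comp2 _ _ _ _ (fun p : T * T => mul p.1 p.2) (fun p => inv p.2) (fun p : T * T => mul p.1 p.2) (e, g) mulC (cont_comp1 invC (@cont_snd _ _ _)) (@cont_comp2 _ _ _ _ (fun p : T * T => mul p.1 p.2) fst snd (e, g) mulC (@cont_fst _ _ _) (@cont_snd _ _ _)); exact.
    by rewrite (mul1g gl) (mulVg gl); exact: (sub1 sS).
  apply: filterS h => y Ay g; exact: Ay.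
exists N; split; first by split => //; exact: open_sub.
by move=> y Ny; have := Ny e; rewrite (inv1 gl) (mul1g gl) (mulg1 gl).
Qed.

End TG.

Lemma onbhs (T : topologicalType) (A : set T) x : open A -> A x -> nbhs x A.
Proof. by move=> oA Ax; apply: open_nbhs_nbhs; split. Qed.

Section ZD.
Variable T : topologicalType.
Hypotheses (hT : hausdorff_space T) (cT : compact [set: T])
  (tdT : totally_disconnected [set: T]).

Lemma sep_closed (P R : set T) : closed P -> closed R -> P `&` R = set0 ->
  exists U V, [/\ open U, open V, P `<=` U, R `<=` V & U `&` V = set0].
Proof.
move=> cP cR PR.
have nT := compact_normal hT cT.
have snP : set_nbhs P (~` R).
  move=> p Pp; apply: onbhs; first exact: closed_openC.
  by move=> Rp; have : (P `&` R) p by []; rewrite PR.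
have [D sD cD] := nT P cP _ snP.
exists (interior D), (~` closure D); split.
- exact: open_interior.
- exact/closed_openC/closed_closure.
- by move=> p Pp; apply: sD.
- by move=> r Rr cDr; exact: (cD r cDr Rr).
- apply/seteqP; split => // u [Uu Vu]; apply: Vu; apply: subset_closure.
  exact: (nbhs_singleton Uu).
Qed.

Variable x : T.
Let Q := [set z | forall C, clopen C -> C x -> C z].

Let Qx : Q x. Proof. by move=> C. Qed.

Let cQ : closed Q.
Proof.
move=> z clz C clC Cx; apply: contrapT => nCz.
have nb : nbhs z (~` C) by apply: onbhs => //; case: clC => _; exact: closed_openC.
have [q [Qq nCq]] := clz _ nb.
exact: nCq (Qq C clC Cx).
Qed.

Let sepQ (P R : set T) r : closed P -> closed R -> P `&` R = set0 ->
  Q `<=` P `|` R -> R `<=` Q -> P x -> R r -> False.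
Proof.
move=> cP cR PR QPR RQ Px Rr.
have [U [V [oU oV PU RV UV]]] := sep_closed _ _ cP cR PR.
pose K := ~` (U `|` V).
have cK : compact K.
  apply: (subclosed_compact _ cT) => //; exact/open_closedC/openU.
have [C [clC Cx CK]] : exists C, [/\ clopen C, C x & C `&` K = set0].
  apply: contrapT => H0.
  have H1 : forall C, clopen C -> C x -> (C `&` K) !=set0.
    move=> C clC Cx; apply/set0P/eqP => CK0; apply: H0; by exists C.
  pose G := filter_from [set C | clopen C /\ C x] (fun C => C `&` K).
  have FG : Filter G.
    apply: filter_from_filter; first by exists setT; split => //; exact: clopenT.
    move=> C1 C2 [cl1 x1] [cl2 x2]; exists (C1 `&` C2); first by split; [exact: clopenI|].
    by move=> z [[? ?] ?].
  have PG : ProperFilter G.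
    by apply: filter_from_proper => C [clC Cx]; exact: H1.
  have GK : G K by exists setT; [split => //; exact: clopenT | move=> z []].
  have [z [Kz clz]] := cK G PG GK.
  have Qz : Q z.
    move=> C' clC' C'x; apply: contrapT => nCz.
    have nb : nbhs z (~` C') by apply: onbhs => //; case: clC' => _; exact: closed_openC.
    have GC : G (C' `&` K) by exists C'.
    have [w [[C'w _] nC'w]] := clz _ _ GC nb.
    exact: nC'w C'w.
  by apply: Kz; case: (QPR z Qz) => [/PU|/RV]; [left|right].
have clCU : clopen (C `&` U).
  split; first by apply: openI => //; case: clC.
  have -> : C `&` U = C `&` ~` V.
    apply/seteqP; split => z [Cz Hz]; split => //.
      by move=> Vz; have : (U `&` V) z by []; rewrite UV.
    apply: contrapT => nUz; have : (C `&` K) z.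
      by split => // -[]. 
    by rewrite CK.
  by apply: closedI; [case: clC | exact: open_closedC].
have := RQ r Rr (C `&` U) clCU (conj Cx (PU x Px)).
move=> [_ Ur]; have : (U `&` V) r by split => //; exact: RV.
by rewrite UV.
Qed.

Let conQ : connected Q.
Proof.
move=> B [b Bb] [O oO BO] [F cF BF].
apply/seteqP; split; first by rewrite BO => z [].
move=> q Qq; apply: contrapT => nBq.
pose R := Q `&` ~` O.
have cB : closed B by rewrite BF; exact: closedI.
have cR : closed R by apply: closedI => //; exact: open_closedC.
have BR : B `&` R = set0.
  apply/seteqP; split => // z [Bz [_ nOz]]; move: Bz; rewrite BO => -[].
  by move=> _ /nOz.
have QBR : Q `<=` B `|` R.
  move=> z Qz; case: (pselect (O z)) => Oz; [left; rewrite BO | right] => //.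
have Rq : R q by split => // Oq; apply: nBq; rewrite BO.
have BQ : B `<=` Q by rewrite BO => z [].
have RQ : R `<=` Q by move=> z [].
case: (pselect (B x)) => Bx.
  exact: (sepQ _ _ _ cB cR BR QBR RQ Bx Rq).
have Rx : R x by case: (QBR x Qx).
apply: (sepQ _ _ _ cR cB _ _ BQ Rx Bb).
  by rewrite setIC.
by rewrite setUC.
Qed.

Lemma zero_dim y : x <> y -> exists C, [/\ clopen C, C x & ~ C y].
Proof.
move=> xy; apply: contrapT => H.
have Qy : Q y.
  move=> C clC Cx; apply: contrapT => nCy; apply: H; by exists C.
have := connected_component_max Qx (@subsetT _ Q) conQ Qy.
by rewrite (tdT x I) => /= yx; apply: xy.
Qed.
End ZD.

Lemma min_pos (P : nat -> Prop) : (exists n, 0 < n /\ P n) ->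
  exists n, [/\ 0 < n, P n & forall m, 0 < m < n -> ~ P m].
Proof.
move=> h.
have ex : exists n, `[< 0 < n /\ P n >] by case: h => n hn; exists n; apply/asboolP.
case: (ex_minnP ex) => k /asboolP [k0 Pk] kmin.
exists k; split => // j /andP [j0 jk] Pj.
by have := kmin j (asboolT (conj j0 Pj)); rewrite leqNgt jk.
Qed.

Theorem lemma4p6 (G : topologicalType) (mul : G -> G -> G) (inv : G -> G) (e : G)
  (A : topologicalType) (amul : A -> A -> A) (ainv : A -> A) (ae : A)
  (act : A -> G -> G) (phi : A) :
  pronilpotent_group mul inv e ->
  coprime_automorphism mul inv e amul ainv ae act phi ->
  forall k1 k2 : G,
    Kset mul inv act phi k1 -> Kset mul inv act phi k2 ->
    theta mul inv act phi k1 = theta mul inv act phi k2 -> k1 = k2.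
Proof.
move=> [[tgG cG hG tdG] nilG] [[tgA cA hA tdA] _ [act1 actM actH actC] _ cop].
move=> k1 k2 [g1 _ hg1] [g2 _ hg2] hth.
have glG : group_laws mul inv e by case: tgG.
have glA : group_laws amul ainv ae by case: tgA.
have mulC : continuous (fun p : G * G => mul p.1 p.2) by case: tgG.
have invC : continuous inv by case: tgG.
pose f := act phi.
have fM : forall x y, f (mul x y) = mul (f x) (f y) by move=> x y; apply: actH.
pose c := mul k2 (inv k1).
have fc : f c = c.
  move: hth; rewrite /theta /c -/f fM (fV glG fM) => hth.
  have -> : f k2 = mul k2 (mul (inv k1) (f k1)) by rewrite hth (mulKVg glG).
  by rewrite (mulA glG) (mulgK glG).
have hk : mul c (mul (inv g1) (f g1)) = mul (inv g2) (f g2).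
  by move: hg1 hg2; rewrite /theta -/f => -> ->; rewrite /c (mulgKV glG).
have act_pow : forall n x, act (gpow amul ae phi n) x = iter n f x.
  by elim=> [|n IH] x //=; rewrite actM IH -iterSr.
have allU : forall U, open_normal_subgroup mul inv e U -> U c.
  move=> U [oU sU nU].
  have [cl nil] := nilG U (And3 oU sU nU).
  have [m [m0 hm mmin]] := min_pos _ (@pow_in _ _ _ _ tgG cG U oU sU c).
  pose V := [set a | forall x, U (mul (inv x) (act a x))].
  have sV : subgroup amul ainv ae V.
    split.
    - by move=> x; rewrite act1 (mulVg glG); exact: (sub1 sU).
    - move=> a b Va Vb x; rewrite actM.
      rewrite -(mulKVg glG (act a x) (act b (act a x))) (mulA glG).
      exact: (subM sU (Va x) (Vb _)).
    - move=> a Va x.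
      have h1 : act a (act (ainv a) x) = x by rewrite -actM (mulVg glA) act1.
      have := subV sU (Va (act (ainv a) x)); rewrite h1 (invM glG) (invK glG) //.
  have nV : nbhs ae V.
    have h : \forall a \near ae, forall x, [set: G] x -> U (mul (inv x) (act a x)).
      apply: (@tube A G setT ae (fun a x => U (mul (inv x) (act a x))) cG).
      move=> x _.
      apply: (cont_nbhs (f := fun p : A * G => mul (inv p.2) (act p.1 p.2))) => //=.
        have := @cont_comp2 _ _ _ _ (fun p : G * G => mul p.1 p.2) (fun p : A * G => inv p.2)
          (fun p : A * G => act p.1 p.2) (ae, x) mulC (cont_comp1 invC (@cont_snd _ _ _)) (actC _); exact.
      by rewrite act1 (mulVg glG); exact: (sub1 sU).
    by apply: filterS h => a ha x; exact: ha.
  have oV : open V by exact: (@open_sub _ _ _ _ tgA V sV nV).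
  have [V' [[oV' sV' nV'] V'V]] := @core_sub _ _ _ _ tgA cA V oV sV.
  have [n [n0 hn nmin]] := min_pos _ (@pow_in _ _ _ _ tgA cA V' oV' sV' phi).
  have copmn : coprime m n.
    apply: contrapT => /negP ncop.
    have g1m : 1 < gcdn m n by rewrite ltn_neqAle eq_sym ncop gcdn_gt0 m0.
    have pp := pdiv_prime g1m.
    have pm : pdiv (gcdn m n) %| m by apply: dvdn_trans (pdiv_dvd _) (dvdn_gcdl _ _).
    have pn : pdiv (gcdn m n) %| n by apply: dvdn_trans (pdiv_dvd _) (dvdn_gcdr _ _).
    apply: (cop (pdiv (gcdn m n))).
      exists phi; split => //; split => //; exists V'; split; first by split.
      by exists n; split.
    exists c; split => //; split => //; exists U; split; first by split.
    by exists m; split.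
  have hnU : forall x, U (mul (inv x) (iter n f x)).
    by move=> x; rewrite -act_pow; exact: (V'V _ hn x).
  exact: (alg_main glG fM sU nU nil m0 copmn hnU fc hk hm).
have ce : c = e.
  apply: contrapT => ce.
  have [W [clW We nWc]] := @zero_dim G hG cG tdG e c (nesym ce).
  have [S [oS sS SW]] := @stab_sub _ _ _ _ tgG cG W clW We.
  have [N [oN NS]] := @core_sub _ _ _ _ tgG cG S oS sS.
  by apply: nWc; apply: SW; apply: NS; apply: allU.
by rewrite -(mulgKV glG k1 k2) -/c ce (mul1g glG).
Qed.
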